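(* The $\mathbf{k}$-algebra homomorphism $A:\mathcal{X}\to\mathcal{Q}$ satisfies $A(\mathcal{J})=0$; equivalently, $A\big(x_{i,j}x_{j,k}-x_{i,k}(x_{i,j}+x_{j,k}+\beta)-\alpha\big)=0$ for all $1\le i<j<k\le n$.
   Context: Let $\mathbf{k}$ be a commutative ring, let $\beta,\alpha\in\mathbf{k}$, and let $n$ be a positive integer; write $[m]=\{1,2,\dots,m\}$. Let $\mathcal{X}=\mathbf{k}[x_{i,j}\mid 1\le i<j\le n]$ be the polynomial ring over $\mathbf{k}$ in the indeterminates $x_{i,j}$. Let $\mathcal{J}$ be the ideal of $\mathcal{X}$ generated by all elements $x_{i,j}x_{j,k}-x_{i,k}(x_{i,j}+x_{j,k}+\beta)-\alpha$ for $1\le i<j<k\le n$. Laurent series: for symbols $r_1,\dots,r_n$, a Laurent series over $\mathbf{k}$ is a formal sum $f=\sum_{a\in\mathbb{Z}^n}\lambda_a r_1^{a_1}\cdots r_n^{a_n}$ ($\lambda_a\in\mathbf{k}$) for which there is $d\in\mathbb{Z}$ such that $\lambda_a=0$ whenever some $a_i<d$. Let $\mathcal{Q}$ be the $\mathbf{k}$-algebra of all such Laurent series with the usual multiplication of series (each coefficient of a product is a finite sum); it contains $\mathbf{k}[[r_1,\dots,r_n]]$ and is given the coefficientwise (product) topology with $\mathbf{k}$ discrete. For $i\in[n]$ put $q_i=r_ir_{i+1}\cdots r_n$; the $q_i$ are invertible in $\mathcal{Q}$, every Laurent monomial $r_1^{b_1}\cdots r_n^{b_n}$ is uniquely of the form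 $q_1^{a_1}\cdots q_n^{a_n}$ with $a\in\mathbb{Z}^n$, and for $i<j$ one has $q_i/q_j=r_ir_{i+1}\cdots r_{j-1}$, so $1-q_i/q_j$ is invertible in $\mathbf{k}[[r_1,\dots,r_n]]$. Let $A:\mathcal{X}\to\mathcal{Q}$ be the $\mathbf{k}$-algebra homomorphism with $A(x_{i,j})=-\dfrac{q_i+\beta+\alpha/q_j}{1-q_i/q_j}$ for $1\le i<j\le n$. *)

(* Defs.v *)
(* Multivariate Laurent series in r_1..r_n (exponents bounded
   below), as in the paper, built by hand: mathcomp has no multivariate series. *)
From HB Require Import structures.
From mathcomp Require Import all_boot all_order all_algebra.
From Stdlib Require Import ClassicalEpsilon.
Set Implicit Arguments. Unset Strict Implicit. Unset Printing Implicit Defensive.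
Import Order.TTheory GRing.Theory Num.Theory.
Local Open Scope ring_scope.

Section Laurent.
Variables (R : comPzRingType) (n : nat).

(* exponent vectors a in Z^n; index l : 'I_n stands for the symbol r_(l+1) *)
Definition expo := {ffun 'I_n -> int}.

Definition ser := expo -> R.

Definition bounded_by (f : ser) (d : int) : Prop :=
  forall a : expo, (exists i, a i < d) -> f a = 0.
Definition is_laurent (f : ser) : Prop := exists d : int, bounded_by f d.

(* a chosen lower bound (valid whenever f is a Laurent series) *)
Definition lb (f : ser) : int := epsilon (inhabits 0%Z) (bounded_by f).

Definition zeroS : ser := fun _ => 0.
Definition constS (c : R) : ser := fun a => if a == [ffun _ => 0%Z] then c else 0.
Definition oneS : ser := constS 1.
Definition monoS (e : expo) : ser := fun a => if a == e then 1 else 0.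
Definition addS (f g : ser) : ser := fun a => f a + g a.
Definition oppS (f : ser) : ser := fun a => - f a.
Definition subS (f g : ser) : ser := addS f (oppS g).

(* product: coefficient of r^c is the finite sum over a + b = c with
   a_i >= lb f and b_i >= lb g, i.e. a_i = lb f + k_i, 0 <= k_i <= c_i - lb f - lb g *)
Definition mulS (f g : ser) : ser := fun c =>
  let d1 := lb f in let d2 := lb g in
  let N := (\max_(i < n) absz ((c i - d1 - d2)%R)).+1 in
  \sum_(k : {ffun 'I_n -> 'I_N} | [forall i, d1 + (k i)%:Z + d2 <= c i])
     f [ffun i => d1 + (k i)%:Z] * g [ffun i => c i - (d1 + (k i)%:Z)].

(* inverse in Q (a chosen Laurent series g with f g = 1, when one exists) *)
Definition invS (f : ser) : ser :=
  epsilon (inhabits zeroS) (fun g => is_laurent g /\ mulS f g = oneS).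
Definition divS (f g : ser) : ser := mulS f (invS g).

Definition qS (i : 'I_n) : ser :=
  monoS [ffun l : 'I_n => if (i <= l)%N then 1%Z else 0%Z].

Definition Ax (beta alpha : R) (i j : 'I_n) : ser :=
  oppS (divS (addS (addS (qS i) (constS beta)) (divS (constS alpha) (qS j)))
             (subS oneS (divS (qS i) (qS j)))).

End Laurent.

(* Main.v *)
Require Import Defs.
From HB Require Import structures.
From mathcomp Require Import all_boot all_order all_algebra zify.
From Stdlib Require Import ClassicalEpsilon FunctionalExtensionality ProofIrrelevance Ring.
Set Implicit Arguments. Unset Strict Implicit. Unset Printing Implicit Defensive.
Import Order.TTheory GRing.Theory Num.Theory.
Local Open Scope ring_scope.
Section S1.
Variables (R : comPzRingType) (n : nat).
Local Notation expo := (expo n).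
Local Notation ser := (ser R n).

Definition esub (c a : expo) : expo := [ffun i => c i - a i].
Definition eadd (a b : expo) : expo := [ffun i => a i + b i].

Lemma bounded_le (f : ser) (d d' : int) : bounded_by f d -> d' <= d -> bounded_by f d'.
Proof. move=> H le a [i Hi]; apply: H; exists i; lia. Qed.

Lemma lbP (f : ser) : is_laurent f -> bounded_by f (lb f).
Proof. move=> H; exact: (epsilon_spec (inhabits 0%Z) (bounded_by f) H). Qed.

Lemma bnd_nz (f : ser) (d : int) a i : bounded_by f d -> f a != 0 -> d <= a i.
Proof.
move=> H nz; rewrite leNgt; apply/negP => lt; move/eqP: nz; apply.
by apply: H; exists i.
Qed.

Definition box (d : int) (M : nat) : seq expo :=
  map (fun k : {ffun 'I_n -> 'I_M.+1} => [ffun i => d + (k i)%:Z])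
      (enum {ffun 'I_n -> 'I_M.+1}).

Lemma box_uniq d M : uniq (box d M).
Proof.
rewrite map_inj_uniq ?enum_uniq // => k k' /ffunP E; apply/ffunP => i.
move: (E i); rewrite !ffunE => /addrI [] h; exact: val_inj.
Qed.

Lemma mem_box (d : int) M (a : expo) : (forall i, d <= a i <= d + M%:Z) -> a \in box d M.
Proof.
move=> H; apply/mapP.
exists [ffun i => inord (absz (a i - d)) : 'I_M.+1]; first by rewrite mem_enum.
apply/ffunP => i; move: (H i) => /andP [h1 h2].
have e : (`|(a i - d)|%N : int) = a i - d by rewrite abszE ger0_norm // subr_ge0.
rewrite !ffunE inordK.
  by rewrite e addrC subrK.
rewrite ltnS -(lez_nat) e; lia.
Qed.

Lemma big_supp (T : eqType) (phi : T -> R) s1 s2 : uniq s1 -> uniq s2 ->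
  (forall x, phi x != 0 -> x \in s1) -> (forall x, phi x != 0 -> x \in s2) ->
  \sum_(x <- s1) phi x = \sum_(x <- s2) phi x.
Proof.
move=> u1 u2 h1 h2.
have E s : \sum_(x <- s) phi x = \sum_(x <- filter (fun x => phi x != 0) s) phi x.
  rewrite big_filter [RHS]big_mkcond; apply: eq_bigr => x _.
  by case: eqP => // ->.
rewrite (E s1) (E s2); apply: perm_big; apply: uniq_perm; rewrite ?filter_uniq //.
move=> x; rewrite !mem_filter; case nz: (phi x != 0) => //=.
by rewrite h1 ?h2.
Qed.

Lemma nz_mul (x y : R) : x * y != 0 -> x != 0 /\ y != 0.
Proof.
by move=> h; split; apply/eqP => e; move: h; rewrite e ?mul0r ?mulr0 eqxx.
Qed.

Lemma box_supp (f g : ser) c (d1 d2 : int) : bounded_by f d1 -> bounded_by g d2 ->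
  forall a, f a * g (esub c a) != 0 ->
     a \in box d1 (\max_(i < n) absz (c i - d1 - d2)%R).
Proof.
move=> Hf Hg a /nz_mul [nf ng]; apply: mem_box => i.
have h1 := bnd_nz i Hf nf; have h2 := bnd_nz i Hg ng; rewrite ffunE in h2.
have h3 := @leq_bigmax _ (fun i : 'I_n => absz (c i - d1 - d2)%R) i.
have h4 : c i - d1 - d2 <= (absz (c i - d1 - d2)%R)%:Z by rewrite abszE ler_norm.
move: h3; rewrite -lez_nat; move: h4.
move: (absz _) (\max_(_ < _) _)%N => x y h4 h3.
apply/andP; split; lia.
Qed.

Lemma mulS_E (f g : ser) c s : is_laurent f -> is_laurent g -> uniq s ->
  (forall a, f a * g (esub c a) != 0 -> a \in s) ->
  mulS f g c = \sum_(a <- s) f a * g (esub c a).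
Proof.
move=> Lf Lg us Hs; rewrite /mulS.
have Bf := lbP Lf; have Bg := lbP Lg.
set d1 := lb f; set d2 := lb g.
set M := \max_(i < n) _.
rewrite (big_supp us (box_uniq d1 M) Hs (box_supp Bf Bg)).
rewrite /box big_map big_mkcond big_enum /=.
apply: eq_bigr => k _.
have -> : [ffun i => c i - (d1 + (k i)%:Z)] = esub c [ffun i => d1 + (k i)%:Z].
  by apply/ffunP => i; rewrite !ffunE.
case: ifP => // /forallPn [i Hi].
rewrite (Bg _) ?mulr0 //; exists i; rewrite !ffunE; lia.
Qed.
End S1.
Arguments box {n} d M. Arguments box_uniq {n} d M.
Section S2.
Variables (R : comPzRingType) (n : nat).
Local Notation expo := (expo n).
Local Notation ser := (ser R n).
Local Notation L := (@is_laurent R n).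

Lemma esubK (c a : expo) : esub c (esub c a) = a.
Proof. by apply/ffunP => i; rewrite !ffunE opprB addrC subrK. Qed.

Lemma boxP (d : int) (M : nat) (a : expo) : a \in box d M -> forall i, d <= a i <= d + M%:Z.
Proof.
case/mapP => k _ -> i; rewrite ffunE; have := ltn_ord (k i).
rewrite ltnS -lez_nat => h; apply/andP; split; [by rewrite lerDl | by rewrite lerD2l].
Qed.

Lemma common2 (d1 d2 : int) : exists d : int, d <= d1 /\ d <= d2.
Proof. exists (if d1 <= d2 then d1 else d2); case: ifP; lia. Qed.

Lemma common3 (f g h : ser) : L f -> L g -> L h ->
  exists d, [/\ bounded_by f d, bounded_by g d & bounded_by h d].
Proof.
move=> Lf Lg Lh; have [d1 [h1 h2]] := common2 (lb f) (lb g).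
have [d [h3 h4]] := common2 d1 (lb h).
exists d; split.
- by apply: (bounded_le (lbP Lf)); lia.
- by apply: (bounded_le (lbP Lg)); lia.
- by apply: (bounded_le (lbP Lh)); lia.
Qed.

Lemma supp_ex (f g : ser) c : L f -> L g ->
  exists s, uniq s /\ forall a, f a * g (esub c a) != 0 -> a \in s.
Proof.
move=> Lf Lg; exists (box (lb f) (\max_(i < n) absz (c i - lb f - lb g)%R)).
split; [exact: box_uniq | move=> a; apply: box_supp; exact: lbP].
Qed.

Lemma mul_bounded (f g : ser) (d1 d2 : int) : L f -> L g -> bounded_by f d1 -> bounded_by g d2 ->
  bounded_by (mulS f g) (d1 + d2).
Proof.
move=> Lf Lg Hf Hg c [i Hi]; rewrite (@mulS_E _ _ _ _ c [::] Lf Lg) ?big_nil //.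
move=> a /nz_mul [nf ng]; have:= bnd_nz i Hf nf; have := bnd_nz i Hg ng.
rewrite ffunE; lia.
Qed.

Lemma L_mul (f g : ser) : L f -> L g -> L (mulS f g).
Proof. by move=> Lf Lg; exists (lb f + lb g); apply: mul_bounded => //; apply: lbP. Qed.

Lemma add_bounded (f g : ser) d : bounded_by f d -> bounded_by g d -> bounded_by (addS f g) d.
Proof. by move=> Hf Hg a H; rewrite /addS Hf ?Hg ?addr0. Qed.

Lemma L_add (f g : ser) : L f -> L g -> L (addS f g).
Proof.
move=> Lf Lg; have [d [h1 h2]] := common2 (lb f) (lb g); exists d.
by apply: add_bounded; apply: bounded_le (lbP _) _.
Qed.

Lemma L_opp (f : ser) : L f -> L (oppS f).
Proof. by case=> d H; exists d => a h; rewrite /oppS H ?oppr0. Qed.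

Lemma L_const (x : R) : L (constS x).
Proof.
exists 0 => a [i Hi]; rewrite /constS; case: eqP => // E.
by move: Hi; rewrite E ffunE.
Qed.

Lemma L_zero : L (@zeroS R n).
Proof. by exists 0. Qed.

Lemma L_mono (e : expo) : L (monoS R e).
Proof.
exists (- (\max_(i < n) absz (e i))%N%:Z) => a [i Hi]; rewrite /monoS.
case: eqP => // E; move: Hi; rewrite E.
have h3 := @leq_bigmax _ (fun i : 'I_n => absz (e i)) i.
have h4 : - e i <= (absz (e i))%:Z by rewrite abszE -normrN ler_norm.
move: h3; rewrite -lez_nat; move: h4.
move: (absz _) (\max_(_ < _) _)%N => x y h4 h3; lia.
Qed.

Lemma mulSC (f g : ser) : L f -> L g -> mulS f g = mulS g f.
Proof.
move=> Lf Lg; apply: functional_extensionality => c.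
have [s [us Hs]] := supp_ex c Lf Lg.
rewrite (mulS_E Lf Lg us Hs) (@mulS_E _ _ _ _ c (map (esub c) s) Lg Lf).
- by rewrite big_map; apply: eq_bigr => a _; rewrite esubK mulrC.
- rewrite map_inj_uniq // => a b E; by rewrite -(esubK c a) E esubK.
move=> b H; apply/mapP; exists (esub c b); last by rewrite esubK.
by apply: Hs; rewrite esubK mulrC.
Qed.

Lemma mulSA (f g h : ser) : L f -> L g -> L h ->
  mulS (mulS f g) h = mulS f (mulS g h).
Proof.
move=> Lf Lg Lh; apply: functional_extensionality => c.
have [d [Bf Bg Bh]] := common3 Lf Lg Lh.
have Lfg := L_mul Lf Lg; have Lgh := L_mul Lg Lh.
have Bfg := mul_bounded Lf Lg Bf Bg; have Bgh := mul_bounded Lg Lh Bg Bh.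
set K := (\max_(i < n) absz (c i - d - d - d)%R)%N.
have hK i : c i - d - d - d <= K%:Z.
  have h3 := @leq_bigmax _ (fun i : 'I_n => absz (c i - d - d - d)%R) i.
  have h4 : c i - d - d - d <= (absz (c i - d - d - d)%R)%:Z by rewrite abszE ler_norm.
  by apply: (le_trans h4); rewrite lez_nat.
pose A := @box n d K; pose B := @box n (d + d) K.
rewrite (@mulS_E _ _ _ _ c B Lfg Lh (box_uniq _ _)); last first.
  move=> b /nz_mul [n1 n2]; apply: mem_box => i; have := bnd_nz i Bfg n1.
  have := bnd_nz i Bh n2; rewrite ffunE; have := hK i; lia.
rewrite (@mulS_E _ _ _ _ c A Lf Lgh (box_uniq _ _)); last first.
  move=> a /nz_mul [n1 n2]; apply: mem_box => i; have := bnd_nz i Bf n1.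
  have := bnd_nz i Bgh n2; rewrite ffunE; have := hK i; lia.
transitivity (\sum_(b <- B) \sum_(a <- A) f a * g (esub b a) * h (esub c b)).
  apply: eq_big_seq => b bB.
  rewrite (@mulS_E _ _ _ _ b A Lf Lg (box_uniq _ _)); first by rewrite big_distrl.
  move=> a /nz_mul [n1 n2]; apply: mem_box => i; have := bnd_nz i Bf n1.
  have := bnd_nz i Bg n2; rewrite ffunE; have := boxP bB i; have := hK i; lia.
rewrite exchange_big /=; apply: eq_big_seq => a aA.
have [fa0|nfa] := eqVneq (f a) 0.
  by rewrite fa0 mul0r big1 // => b _; rewrite !mul0r.
rewrite (@mulS_E _ _ _ _ (esub c a) (map (fun b => esub b a) B) Lg Lh).
- rewrite big_distrr [RHS]big_map; apply: eq_bigr => b _; rewrite -mulrA.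
  congr (_ * (_ * h _)); apply/ffunP => i; rewrite !ffunE; lia.
- rewrite map_inj_uniq ?box_uniq // => b b' /ffunP E; apply/ffunP => i.
  by move: (E i); rewrite !ffunE => /addIr.
move=> b' /nz_mul [n1 n2]; apply/mapP; exists (eadd a b'); last first.
  by apply/ffunP => i; rewrite !ffunE addrAC subrr add0r.
apply: mem_box => i; have := bnd_nz i Bf nfa; have := bnd_nz i Bg n1.
have := bnd_nz i Bh n2; rewrite !ffunE; have := hK i; lia.
Qed.

Lemma mulSDl (f g h : ser) : L f -> L g -> L h ->
  mulS (addS f g) h = addS (mulS f h) (mulS g h).
Proof.
move=> Lf Lg Lh; apply: functional_extensionality => c.
have [d [Bf Bg Bh]] := common3 Lf Lg Lh.
have Bfg := add_bounded Bf Bg; have Lfg := L_add Lf Lg.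
change (mulS (addS f g) h c = mulS f h c + mulS g h c).
rewrite (mulS_E Lfg Lh (box_uniq _ _) (box_supp Bfg Bh)).
rewrite (mulS_E Lf Lh (box_uniq _ _) (box_supp Bf Bh)).
rewrite (mulS_E Lg Lh (box_uniq _ _) (box_supp Bg Bh)) -big_split.
by apply: eq_bigr => a _; rewrite /addS mulrDl.
Qed.

Lemma mulS1 (f : ser) : L f -> mulS (@oneS R n) f = f.
Proof.
move=> Lf; apply: functional_extensionality => c.
rewrite (@mulS_E _ _ _ _ c [:: [ffun _ => 0%Z]] (L_const 1) Lf) //.
  rewrite big_seq1 /oneS /constS eqxx mul1r; congr f.
  by apply/ffunP => i; rewrite !ffunE subr0.
move=> a /nz_mul [n1 _]; move: n1; rewrite /oneS /constS inE.
by case: ifP => // _; rewrite eqxx.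
Qed.

Lemma mono_mul (e e' : expo) : mulS (monoS R e) (monoS R e') = monoS R (eadd e e').
Proof.
apply: functional_extensionality => c.
rewrite (@mulS_E _ _ _ _ c [:: e] (L_mono e) (L_mono e')) //.
  rewrite big_seq1 /monoS eqxx mul1r.
  have E : (esub c e == e') = (c == eadd e e').
    apply/eqP/eqP => H.
      by apply/ffunP => i; move/ffunP: H => /(_ i); rewrite !ffunE => <-; rewrite addrC subrK.
    by apply/ffunP => i; rewrite H !ffunE addrC addKr.
  by rewrite E.
move=> a /nz_mul [n1 _]; move: n1; rewrite /monoS inE.
by case: ifP => // _; rewrite eqxx.
Qed.
End S2.
Section S3.
Variables (R : comPzRingType) (n : nat).
Local Notation expo := (expo n).
Local Notation ser := (ser R n).

Definition Lt := {f : ser | is_laurent f}.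
Definition L0 : Lt := exist _ (@zeroS R n) (@L_zero R n).
Definition L1 : Lt := exist _ (@oneS R n) (@L_const R n 1).
Definition Ladd (u v : Lt) : Lt := exist _ (addS (sval u) (sval v)) (L_add (svalP u) (svalP v)).
Definition Lmul (u v : Lt) : Lt := exist _ (mulS (sval u) (sval v)) (L_mul (svalP u) (svalP v)).
Definition Lopp (u : Lt) : Lt := exist _ (oppS (sval u)) (L_opp (svalP u)).
Definition Lsub (u v : Lt) : Lt := Ladd u (Lopp v).

Lemma Lext (u v : Lt) : sval u = sval v -> u = v.
Proof. case: u => f p; case: v => g q /= E; subst g; congr exist; exact: proof_irrelevance. Qed.

Lemma Lth : ring_theory L0 L1 Ladd Lmul Lsub Lopp (@eq Lt).
Proof.
constructor.
- move=> x; apply: Lext; apply: functional_extensionality => a; by rewrite /= /addS add0r.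
- move=> x y; apply: Lext; apply: functional_extensionality => a; by rewrite /= /addS addrC.
- move=> x y z; apply: Lext; apply: functional_extensionality => a; by rewrite /= /addS addrA.
- move=> x; apply: Lext; exact: mulS1 (svalP x).
- move=> x y; apply: Lext; exact: mulSC (svalP x) (svalP y).
- move=> x y z; apply: Lext; symmetry; exact: mulSA (svalP x) (svalP y) (svalP z).
- move=> x y z; apply: Lext; exact: mulSDl (svalP x) (svalP y) (svalP z).
- by [].
- move=> x; apply: Lext; apply: functional_extensionality => a; by rewrite /= /addS /oppS addrN.
Qed.

Add Ring Lring : Lth.

Declare Scope L_scope.
Delimit Scope L_scope with L.
Local Infix "+" := Ladd : L_scope.
Local Infix "*" := Lmul : L_scope.
Local Infix "-" := Lsub : L_scope.
Local Notation "- x" := (Lopp x) : L_scope.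
Local Notation "1" := L1 : L_scope.
Local Notation "0" := L0 : L_scope.
Local Open Scope L_scope.

Lemma alg (qi qj qk pj pk wij wjk wik a b : Lt) :
  qj * pj = 1 -> qk * pk = 1 -> (1 - qi * pj) * wij = 1 ->
  (1 - qj * pk) * wjk = 1 -> (1 - qi * pk) * wik = 1 ->
  let xij := - ((qi + b + a * pj) * wij) in
  let xjk := - ((qj + b + a * pk) * wjk) in
  let xik := - ((qi + b + a * pk) * wik) in
  xij * xjk - xik * (xij + xjk + b) - a = 0.
Proof.
move=> Hj Hk Hij Hjk Hik xij xjk xik.
have U : forall qi qj pj wij, qj * pj = 1 -> (1 - qi * pj) * wij = 1 ->
    (qj - qi) * (pj * wij) = 1.
  move=> qi' qj' pj' w H1 H2.
  transitivity ((qj' * pj' - qi' * pj') * w); first ring.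
  by rewrite H1.
have P : forall qi qj pj wij, qj * pj = 1 -> (1 - qi * pj) * wij = 1 ->
    - ((qi + b + a * pj) * wij) * (qj - qi) = - (qi * qj + b * qj + a).
  move=> qi' qj' pj' w H1 H2.
  transitivity (- ((qi' + b + a * pj') * w * (qj' - qi') * (qj' * pj'))).
    by rewrite H1; ring.
  transitivity (- ((qi' + b + a * pj') * qj' * ((qj' - qi') * (pj' * w)))).
    ring.
  rewrite (U _ _ _ _ H1 H2).
  transitivity (- (qi' * qj' + b * qj' + a * (qj' * pj'))); first ring.
  by rewrite H1; ring.
have E : (xij * xjk - xik * (xij + xjk + b) - a) * (qj - qi) * (qk - qj) * (qk - qi) = 0.
  transitivity ((xij * (qj - qi)) * (xjk * (qk - qj)) * (qk - qi)
     - (xik * (qk - qi)) * (xij * (qj - qi)) * (qk - qj)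
     - (xik * (qk - qi)) * (xjk * (qk - qj)) * (qj - qi)
     - b * (xik * (qk - qi)) * (qj - qi) * (qk - qj)
     - a * (qj - qi) * (qk - qj) * (qk - qi)); first ring.
  rewrite /xij /xjk /xik (P _ _ _ _ Hj Hij) (P _ _ _ _ Hk Hjk) (P _ _ _ _ Hk Hik).
  ring.
transitivity ((xij * xjk - xik * (xij + xjk + b) - a) * ((qj - qi) * (pj * wij))
   * ((qk - qj) * (pk * wjk)) * ((qk - qi) * (pk * wik))).
  by rewrite (U _ _ _ _ Hj Hij) (U _ _ _ _ Hk Hjk) (U _ _ _ _ Hk Hik); ring.
transitivity (((xij * xjk - xik * (xij + xjk + b) - a) * (qj - qi) * (qk - qj) * (qk - qi))
   * (pj * wij * (pk * wjk) * (pk * wik))); first ring.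
by rewrite E; ring.
Qed.

Definition ej (j : 'I_n) : expo := [ffun l : 'I_n => if (j <= l)%N then 1%Z else 0%Z].
Definition eneg (e : expo) : expo := [ffun l => - e l]%R.

Lemma invS_spec (f : ser) : (exists g, is_laurent g /\ mulS f g = @oneS R n) ->
  is_laurent (invS f) /\ mulS f (invS f) = @oneS R n.
Proof. move=> H; exact: (epsilon_spec (inhabits (@zeroS R n)) _ H). Qed.

Lemma qS_inv j : mulS (qS R j) (monoS R (eneg (ej j))) = @oneS R n.
Proof.
rewrite /qS mono_mul; apply: functional_extensionality => a.
rewrite /monoS /oneS /constS; congr (if _ then _ else _); congr (a == _).
by apply/ffunP => l; rewrite !ffunE addrN.
Qed.

Lemma ex_qinv j : exists g, is_laurent g /\ mulS (qS R j) g = @oneS R n.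
Proof. exists (monoS R (eneg (ej j))); split; [exact: L_mono | exact: qS_inv]. Qed.

Definition Qt (j : 'I_n) : Lt := exist _ (qS R j) (@L_mono R n (ej j)).
Definition Qit (j : 'I_n) : Lt := exist _ (invS (qS R j)) (proj1 (invS_spec (ex_qinv j))).
Lemma HQ j : Qt j * Qit j = 1.
Proof. apply: Lext; exact: (proj2 (invS_spec (ex_qinv j))). Qed.

Lemma Qit_eq j : sval (Qit j) = monoS R (eneg (ej j)).
Proof.
pose Mt : Lt := exist _ (monoS R (eneg (ej j))) (@L_mono R n _).
have HM : Qt j * Mt = 1 by apply: Lext; exact: qS_inv.
suff -> : Qit j = Mt by [].
transitivity (Qit j * (Qt j * Mt)); first by rewrite HM; ring.
transitivity ((Qt j * Qit j) * Mt); first ring.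
by rewrite HQ; ring.
Qed.

Section Geo.
Variables (i j : 'I_n).
Hypothesis hij : (i < j)%N.
Let u : expo := eadd (ej i) (eneg (ej j)).

Lemma u_i : u i = 1%R.
Proof. by rewrite /u !ffunE leqnn leqNgt hij /= subr0. Qed.

Lemma u_ge0 l : (0 <= u l)%R.
Proof.
rewrite /u !ffunE; case: (leqP j l) => h.
  by rewrite (leq_trans (ltnW hij) h) subrr.
by case: (i <= l)%N; rewrite subr0.
Qed.

Definition geoS : ser := fun a =>
  if (0 <= a i)%R && (a == [ffun l => a i * u l]%R) then 1%R else 0%R.

Lemma L_geo : is_laurent geoS.
Proof.
exists 0%R => a [l Hl]; rewrite /geoS; case: andP => // [[h1 /eqP E]].
move: Hl; rewrite E ffunE; have := u_ge0 l.
by move=> h2; rewrite ltNge mulr_ge0.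
Qed.

Lemma coefG c : (geoS c - geoS (esub c u))%R = (@oneS R n c).
Proof.
rewrite /geoS /oneS /constS.
have Ei : esub c u i = (c i - 1)%R by rewrite ffunE u_i.
rewrite Ei.
have E1 : (esub c u == [ffun l => (c i - 1) * u l]%R) = (c == [ffun l => c i * u l]%R).
  apply/eqP/eqP => /ffunP H; apply/ffunP => l; move: (H l); rewrite !ffunE mulrBl mul1r.
    by move/addIr.
  by move=> ->.
have E2 : (c == [ffun _ => 0%Z]) = ((c i == 0%R) && (c == [ffun l => c i * u l]%R)).
  apply/eqP/andP => [->|[/eqP h0 /eqP ->]]; first by rewrite ffunE eqxx; split => //;
    apply/eqP/ffunP => l; rewrite !ffunE mul0r.
  by apply/ffunP => l; rewrite !ffunE h0 mul0r.
rewrite E1 E2; case: (c == _); rewrite ?andbF ?subrr //= !andbT.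
case: (ltgtP (c i) 0%R) => h; rewrite ?h ?lexx /=;
  repeat case: ifP => /= ?; rewrite ?subrr ?subr0 ?sub0r //; lia.
Qed.

Lemma ex_tinv : exists g, is_laurent g /\ mulS (sval (1 - Qt i * Qit j)) g = @oneS R n.
Proof.
pose Mu : Lt := exist _ (monoS R u) (@L_mono R n _).
pose Gt : Lt := exist _ geoS L_geo.
have EM : Qt i * Qit j = Mu.
  by apply: Lext; have := Qit_eq j; rewrite /= => ->; rewrite /qS mono_mul.
suff H : (1 - Qt i * Qit j) * Gt = 1.
  by exists geoS; split; [exact: L_geo | exact: (f_equal sval H)].
rewrite EM; transitivity (Gt - Mu * Gt); first ring.
apply: Lext; apply: functional_extensionality => c /=.
rewrite /addS /oppS -coefG; congr (_ - _)%R.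
rewrite (@mulS_E _ _ _ _ c [:: u] (@L_mono R n _) L_geo) //.
  by rewrite big_seq1 /monoS eqxx mul1r.
move=> a /nz_mul [n1 _]; move: n1; rewrite /monoS inE.
by case: ifP => // _; rewrite eqxx.
Qed.

Definition Wt : Lt := exist _ (invS (sval (1 - Qt i * Qit j))) (proj1 (invS_spec ex_tinv)).
Lemma HW : (1 - Qt i * Qit j) * Wt = 1.
Proof. apply: Lext; exact: (proj2 (invS_spec ex_tinv)). Qed.
End Geo.

Definition Xt (b a : Lt) (i j : 'I_n) (hij : (i < j)%N) : Lt :=
  - ((Qt i + b + a * Qit j) * Wt hij).

Lemma Xt_eq (beta alpha : R) (i j : 'I_n) (hij : (i < j)%N) :
  Ax beta alpha i j = sval (Xt (exist _ (constS beta) (@L_const R n _))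
                              (exist _ (constS alpha) (@L_const R n _)) hij).
Proof. by []. Qed.

Lemma main_ser (beta alpha : R) (i j k : 'I_n) (hij : (i < j)%N) (hjk : (j < k)%N) :
    subS (subS (mulS (Ax beta alpha i j) (Ax beta alpha j k))
               (mulS (Ax beta alpha i k)
                     (addS (addS (Ax beta alpha i j) (Ax beta alpha j k))
                           (@constS R n beta))))
         (@constS R n alpha)
    = @zeroS R n.
Proof.
have hik := ltn_trans hij hjk.
pose B : Lt := exist _ (constS beta) (@L_const R n _).
pose A : Lt := exist _ (constS alpha) (@L_const R n _).
rewrite (Xt_eq beta alpha hij) (Xt_eq beta alpha hjk) (Xt_eq beta alpha hik).
change (sval (Xt B A hij * Xt B A hjk - Xt B A hik * (Xt B A hij + Xt B A hjk + B) - A)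
        = sval L0).
congr sval.
exact (@alg _ _ _ _ _ _ _ _ A B (HQ j) (HQ k) (HW hij) (HW hjk) (HW hik)).
Qed.
End S3.

Theorem proposition3p5 (R : comPzRingType) (beta alpha : R) (n : nat)
  (hn : (0 < n)%N) :
  forall i j k : 'I_n, (i < j)%N -> (j < k)%N ->
    subS (subS (mulS (Ax beta alpha i j) (Ax beta alpha j k))
               (mulS (Ax beta alpha i k)
                     (addS (addS (Ax beta alpha i j) (Ax beta alpha j k))
                           (@constS R n beta))))
         (@constS R n alpha)
    = @zeroS R n.
Proof.
move=> i j k hij hjk; exact: (main_ser beta alpha hij hjk).
Qed.
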